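(* Let $G = (X\dot\cup Y,E)$ be a $k$-regular bipartite graph on $2n$ vertices, let $c>0$, and let $(S_1,T_1)$ and $(S_2,T_2)$ be two $c$-internal cuts. Then $d((S_1,T_1),(S_2,T_2)) \le \frac{40cn}{\log n}$ or $d((S_1,T_1),(S_2,T_2)) \ge k/10$.
   Context: A cut in $G$ is a pair $(S,T)$ with $S\subseteq X$, $T\subseteq Y$; write $S^c = X\setminus S$, $T^c=Y\setminus T$. The cross edges with respect to $(S,T)$ are the edges joining $S$ to $T^c$ or $S^c$ to $T$. A cut is $c$-internal if it has at most $4cnk/\log n$ cross edges. $d((S_1,T_1),(S_2,T_2)) = |S_1\setminus S_2|+|S_2\setminus S_1|+|T_1\setminus T_2|+|T_2\setminus T_1|$. $\log$ is the natural logarithm. *)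

(* Defs.v *)
From HB Require Import structures.
From mathcomp Require Import all_boot all_order all_algebra.
From mathcomp Require Import reals exp.
Set Implicit Arguments. Unset Strict Implicit. Unset Printing Implicit Defensive.
Import Order.TTheory GRing.Theory Num.Theory.
Local Open Scope ring_scope.

Definition k_regular_bip (X Y : finType) (E : X -> Y -> bool) (k : nat) : Prop :=
  (forall x : X, #|[set y : Y | E x y]| = k) /\
  (forall y : Y, #|[set x : X | E x y]| = k).

Definition cross_edges (X Y : finType) (E : X -> Y -> bool)
  (S : {set X}) (T : {set Y}) : {set X * Y} :=
  [set p : X * Y | E p.1 p.2 &&
     (((p.1 \in S) && (p.2 \notin T)) || ((p.1 \notin S) && (p.2 \in T)))].

Definition c_internal (R : realType) (X Y : finType) (E : X -> Y -> bool)
  (n k : nat) (c : R) (S : {set X}) (T : {set Y}) : Prop :=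
  (#|cross_edges E S T|%:R <= 4 * c * n%:R * k%:R / ln (n%:R : R)).

Definition cut_dist (X Y : finType) (S1 S2 : {set X}) (T1 T2 : {set Y}) : nat :=
  (#|S1 :\: S2| + #|S2 :\: S1| + #|T1 :\: T2| + #|T2 :\: T1|)%N.

(* Main.v *)
From HB Require Import structures.
From mathcomp Require Import all_boot all_order all_algebra.
From mathcomp Require Import reals exp.
From mathcomp Require Import zify.
Require Import Defs.
Import Order.TTheory GRing.Theory Num.Theory.
From mathcomp Require Import lra.

Lemma symd_card (T : finType) (S1 S2 : {set T}) :
  #|(S1 :\: S2) :|: (S2 :\: S1)| = (#|S1 :\: S2| + #|S2 :\: S1|)%N.
Proof.
rewrite cardsU; suff -> : (S1 :\: S2) :&: (S2 :\: S1) = set0 by rewrite cards0 subn0.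
by apply/setP => x; rewrite !inE; case: (x \in S1); case: (x \in S2).
Qed.

Lemma half_bound (X Y : finType) (E : X -> Y -> bool) k (A : {set X}) (B : {set Y}) :
  (forall x : X, #|[set y : Y | E x y]| = k) ->
  (#|A| * (k - #|B|) <= \sum_(p : X * Y) (E p.1 p.2 && (p.1 \in A) && (p.2 \notin B) : nat))%N.
Proof.
move=> Hk.
rewrite -(pair_bigA _ (fun x y => (E x y && (x \in A) && (y \notin B) : nat))) /=.
rewrite -sum1_card big_distrl /= [X in (_ <= X)%N](bigID (fun x => x \in A)) /=.
apply: leq_trans (leq_addr _ _).
apply: leq_sum => x xA; rewrite mul1n.
have -> : (\sum_(y : Y) (E x y && (x \in A) && (y \notin B) : nat))%N
   = #|[set y | E x y & y \notin B]|.
  rewrite -sum1_card [RHS]big_mkcond /=; apply: eq_bigr => y _; rewrite inE xA andbT.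
  by case: (E x y && (y \notin B)).
rewrite leq_subLR -(Hk x).
apply: leq_trans (leq_card_setU _ _).
apply: subset_leq_card; apply/subsetP => y; rewrite !inE => Exy.
by rewrite Exy; case: (y \in B); rewrite ?orbT.
Qed.

Lemma half_bound2 (X Y : finType) (E : X -> Y -> bool) k (A : {set X}) (B : {set Y}) :
  (forall y : Y, #|[set x : X | E x y]| = k) ->
  (#|B| * (k - #|A|) <= \sum_(p : X * Y) (E p.1 p.2 && (p.1 \notin A) && (p.2 \in B) : nat))%N.
Proof.
move=> Hk.
rewrite -(pair_bigA _ (fun x y => (E x y && (x \notin A) && (y \in B) : nat))) /=.
rewrite exchange_big /=.
rewrite -sum1_card big_distrl /= [X in (_ <= X)%N](bigID (fun y => y \in B)) /=.
apply: leq_trans (leq_addr _ _).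
apply: leq_sum => y yB; rewrite mul1n.
have -> : (\sum_(x : X) (E x y && (x \notin A) && (y \in B)) : nat)%N
   = #|[set x | E x y & x \notin A]|.
  rewrite -sum1_card [RHS]big_mkcond /=; apply: eq_bigr => x _; rewrite inE yB andbT.
  by case: (E x y && (x \notin A)).
rewrite leq_subLR -(Hk y).
apply: leq_trans (leq_card_setU _ _).
apply: subset_leq_card; apply/subsetP => x; rewrite !inE => Exy.
by rewrite Exy; case: (x \in A); rewrite ?orbT.
Qed.

Lemma card_sumb (T : finType) (C : {set T}) : (\sum_(p : T) (p \in C : nat))%N = #|C|.
Proof. by rewrite -sum1_card [RHS]big_mkcond /=; apply: eq_bigr => p _; case: (p \in C). Qed.

Lemma comb_bound (X Y : finType) (E : X -> Y -> bool) (k : nat)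
  (S1 S2 : {set X}) (T1 T2 : {set Y}) : k_regular_bip E k ->
  let d := cut_dist S1 S2 T1 T2 in
  (d * (k - d) <= #|cross_edges E S1 T1| + #|cross_edges E S2 T2|)%N.
Proof.
case=> HX HY /=.
set A := (S1 :\: S2) :|: (S2 :\: S1).
set B := (T1 :\: T2) :|: (T2 :\: T1).
have -> : cut_dist S1 S2 T1 T2 = (#|A| + #|B|)%N.
  by rewrite /cut_dist /A /B !symd_card addnA.
apply: (@leq_trans (#|A| * (k - #|B|) + #|B| * (k - #|A|))%N).
  rewrite mulnDl; apply: leq_add; apply: leq_mul => //; apply: leq_sub2l; lia.
apply: leq_trans (leq_add (@half_bound _ _ E k A B HX) (@half_bound2 _ _ E k A B HY)) _.
rewrite -big_split -!card_sumb -big_split /=; apply: leq_sum => [[x y]] _ /=.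
rewrite /A /B !inE /=.
by case: (E x y); case: (x \in S1); case: (x \in S2); case: (y \in T1); case: (y \in T2).
Qed.
Local Open Scope ring_scope.
Theorem claim2p6 (R : realType) (X Y : finType) (E : X -> Y -> bool) (n k : nat)
  (c : R) (S1 S2 : {set X}) (T1 T2 : {set Y}) :
  (1 < n)%N ->
  (#|X| + #|Y|)%N = (2 * n)%N ->
  k_regular_bip E k ->
  0 < c ->
  c_internal E n k c S1 T1 ->
  c_internal E n k c S2 T2 ->
  ((cut_dist S1 S2 T1 T2)%:R : R) <= 40 * c * n%:R / ln (n%:R : R) \/
  ((cut_dist S1 S2 T1 T2)%:R : R) >= k%:R / 10.
Proof.
move=> n1 _ Hreg c0 H1 H2.
move: (@comb_bound _ _ E k S1 S2 T1 T2 Hreg) => /= Hc.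
rewrite /c_internal in H1 H2.
set d := cut_dist S1 S2 T1 T2 in Hc *.
move: H1 H2.
set c1 := #|cross_edges E S1 T1|; set c2 := #|cross_edges E S2 T2|.
move=> H1 H2.
have L0 : 0 < ln (n%:R : R) by apply: ln_gt0; rewrite ltr1n.
set L := ln (n%:R : R) in L0 H1 H2 *.
case: (leqP k (10 * d)) => hk.
  right; have hk' : (k%:R : R) <= (10 * d)%:R by rewrite ler_nat.
  rewrite natrM in hk'; lra.
left.
have hn : (9 * d * k <= 10 * (c1 + c2))%N.
  have [e ek] : exists e, k = (d + e)%N by exists (k - d)%N; lia.
  rewrite ek addKn in Hc *; rewrite ek in hk.
  apply: leq_trans (_ : 10 * (d * e) <= _)%N; last by rewrite leq_mul2l Hc orbT.
  have : (9 * d <= e)%N by lia.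
  move=> h; rewrite mulnDr mulnA.
  have : (9 * d * d <= d * e)%N by rewrite [(d * e)%N]mulnC; exact: leq_mul h (leqnn d).
  lia.
have hk0 : (0 < k)%N by lia.
have hnR : ((9 * d * k)%:R : R) <= (10 * (c1 + c2))%:R by rewrite ler_nat.
rewrite !natrM natrD in hnR.
have kR : (0 : R) < k%:R by rewrite ltr0n.
have nR : (0 : R) <= n%:R by [].
have LL : L != 0 by rewrite gt_eqF.
have H1' : c1%:R * L <= 4 * c * n%:R * k%:R.
  by rewrite -[X in _ <= X](divfK LL) ler_pM2r.
have H2' : c2%:R * L <= 4 * c * n%:R * k%:R.
  by rewrite -[X in _ <= X](divfK LL) ler_pM2r.
clear H1 H2; move: H1' H2' => H1 H2.
rewrite -(ler_pM2r L0) (divfK LL).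
set D := (d%:R : R) in hnR *; set K := (k%:R : R) in hnR H1 H2 kR *.
set N := (n%:R : R) in H1 H2 nR *.
have h1 : 9 * D * K * L <= 80 * c * N * K by nra.
have h3 : (9 * D * L) <= 80 * c * N.
  by rewrite -(ler_pM2r kR); nra.
have cN : 0 <= c * N by rewrite mulr_ge0 // ltW.
nra.
Qed.
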